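(* Let $R$ be a commutative ring with identity and $M$ a non-zero comultiplication $R$-module. Then $M$ is uniform if and only if $M$ is cocyclic.
   Context: An $R$-module $M$ is a comultiplication module if for every submodule $N$ of $M$ there is an ideal $I$ of $R$ with $N=\mathrm{Ann}_M(I)$. $M$ is uniform if any two non-zero submodules of $M$ have non-zero intersection. $\mathrm{Soc}(M)$ is the sum of all minimal submodules of $M$; $M$ is cocyclic if $\mathrm{Soc}(M)$ is a simple submodule of $M$ that is large in $M$ (a submodule $N$ is large if $N\cap L\neq0$ for every non-zero submodule $L$). *)

(* Defs.v *)
From HB Require Import structures.
From mathcomp Require Import all_boot all_order all_algebra.
Set Implicit Arguments. Unset Strict Implicit. Unset Printing Implicit Defensive.
Import GRing.Theory.
Local Open Scope ring_scope.

Section ModuleDefs.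
Variables (R : comNzRingType) (M : lmodType R).

Definition submodule (N : M -> Prop) : Prop :=
  [/\ N 0, (forall x y, N x -> N y -> N (x + y)) &
      (forall (r : R) x, N x -> N (r *: x))].

Definition ideal (I : R -> Prop) : Prop :=
  [/\ I 0, (forall a b, I a -> I b -> I (a + b)) &
      (forall r a, I a -> I (r * a))].

Definition AnnM (I : R -> Prop) : M -> Prop :=
  fun m => forall r, I r -> r *: m = 0.

Definition comultiplication : Prop :=
  forall N : M -> Prop, submodule N ->
    exists I : R -> Prop, ideal I /\ (forall m, N m <-> AnnM I m).

Definition nonzero_sub (N : M -> Prop) : Prop := exists m, N m /\ m <> 0.

Definition subI (N L : M -> Prop) : M -> Prop := fun m => N m /\ L m.

Definition uniform : Prop :=
  forall N L, submodule N -> submodule L -> nonzero_sub N -> nonzero_sub L ->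
    nonzero_sub (subI N L).

Definition minimal_sub (N : M -> Prop) : Prop :=
  [/\ submodule N, nonzero_sub N &
      forall L, submodule L -> (forall m, L m -> N m) -> nonzero_sub L ->
        forall m, N m -> L m].

(* Soc(M): sum of all minimal submodules, i.e. finite sums of elements
   each lying in some minimal submodule *)
Definition Soc : M -> Prop :=
  fun m => exists s : seq M,
    (forall x, x \in s -> exists N, minimal_sub N /\ N x) /\
    m = \sum_(x <- s) x.

Definition large (N : M -> Prop) : Prop :=
  forall L, submodule L -> nonzero_sub L -> nonzero_sub (subI N L).

Definition cocyclic : Prop := minimal_sub Soc /\ large Soc.

End ModuleDefs.

(* Main.v *)
Require Import Defs.
From HB Require Import structures.
From mathcomp Require Import all_boot all_order all_algebra.
From mathcomp Require Import boolp classical_sets.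
Import GRing.Theory.
Local Open Scope ring_scope.
Local Open Scope classical_set_scope.

Lemma exists_max (R : comNzRingType) (P0 : set R) : ideal P0 -> ~ P0 1 ->
  exists Q : set R, [/\ ideal Q, ~ Q 1, P0 `<=` Q &
    forall s, ~ Q s -> exists q t, Q q /\ 1 = q + t * s].
Proof.
move=> iP0 nP0.
pose Pp (A : set R) := A = set0 \/ [/\ ideal A, ~ A 1 & P0 `<=` A].
have := @Zorn_bigcup R Pp.
case.
- move=> F FP Ftot.
  have [[X0 [FX0 X0n]]|none] := pselect (exists X, F X /\ X <> set0); last first.
    left; apply/seteqP; split => // x [X FX Xx]; apply: none; exists X; split=>//.
    by move=> X0; rewrite X0 in Xx.
  have inP X a : F X -> X a -> [/\ ideal X, ~ X 1 & P0 `<=` X].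
    move=> FX Xa; case: (FP X FX) => // X0'; by rewrite X0' in Xa.
  have [a X0a] : exists a, X0 a.
    apply: contra_notP X0n => na; apply/seteqP; split => // x Xx; apply: na; by exists x.
  have [[iX0 _ _] _ P0X0] := inP _ _ FX0 X0a.
  right; split.
  + split.
    * by exists X0.
    * move=> x y [X1 FX1 X1x] [X2 FX2 X2y].
      case: (Ftot _ _ FX1 FX2) => [s12|s21].
      - have [[_ hD _] _ _] := inP _ _ FX2 X2y; exists X2 => //; apply: hD => //; exact: s12.
      - have [[_ hD _] _ _] := inP _ _ FX1 X1x; exists X1 => //; apply: hD => //; exact: s21.
    * move=> r x [X1 FX1 X1x]; have [[_ _ hM] _ _] := inP _ _ FX1 X1x; exists X1 => //; exact: hM.
  + move=> [X1 FX1 X11]; have [_ h _] := inP _ _ FX1 X11; exact: h.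
  + move=> x Px; exists X0 => //; exact: P0X0.
- move=> A [PA Amax].
  case: PA => [A0|[iA nA1 P0A]].
  + exfalso; apply: (Amax P0); last by right; split.
    rewrite A0; split => // hh; have [h0 _ _] := iP0; by have := hh 0 h0.
  + exists A; split => // s nAs.
    pose B : set R := fun x => exists q t, A q /\ x = q + t * s.
    have [hA0 hAD hAM] := iA.
    have iB : ideal B.
      split.
      * by exists 0, 0; split => //; rewrite mul0r addr0.
      * move=> a b [q1 [t1 [Aq1 ->]]] [q2 [t2 [Aq2 ->]]].
        exists (q1 + q2), (t1 + t2); split; first exact: hAD.
        by rewrite mulrDl !addrA; congr (_ + _); rewrite -!addrA; congr (_ + _); rewrite addrC.
      * move=> r a [q [t [Aq ->]]]; exists (r * q), (r * t); split; first exact: hAM.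
        by rewrite mulrDr mulrA.
    have AB : A `<` B.
      split.
      * by move=> a Aa; exists a, 0; split => //; rewrite mul0r addr0.
      * move=> BA; apply: nAs; apply: BA; exists 0, 1; split => //; by rewrite add0r mul1r.
    have := Amax B AB.
    move=> nPB.
    apply: contra_notP nPB => nB1; right; split => //.
    move=> x /P0A Ax; exists x, 0; split => //; by rewrite mul0r addr0.
Qed.
Lemma min_in (R : comNzRingType) (M : lmodType R) : comultiplication M ->
  forall N : M -> Prop, submodule N -> nonzero_sub N ->
  exists K, minimal_sub K /\ (forall x, K x -> N x).
Proof.
move=> cM N [N0 ND NZ] [m [Nm m0]].
pose P0 : set R := fun r => r *: m = 0.
have iP0 : ideal P0.
  split; rewrite /P0.
  - by rewrite scale0r.
  - by move=> a b Ha Hb; rewrite scalerDl Ha Hb addr0.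
  - by move=> r a Ha; rewrite -scalerA Ha scaler0.
have nP0 : ~ P0 1 by rewrite /P0 scale1r.
have [Q [[Q0 QD QM] nQ1 P0Q Qmax]] := @exists_max _ _ iP0 nP0.
pose Qm : M -> Prop := fun x => exists q, Q q /\ x = q *: m.
have sQm : submodule Qm.
  split.
  - by exists 0; rewrite scale0r.
  - move=> x y [q1 [Q1 ->]] [q2 [Q2 ->]]; exists (q1 + q2); split; first exact: QD.
    by rewrite scalerDl.
  - move=> r x [q [Qq ->]]; exists (r * q); split; first exact: QM.
    by rewrite scalerA.
have [I [_ HI]] := cM Qm sQm.
have nQm : ~ Qm m.
  move=> [q [Qq e]]; apply: nQ1.
  have : P0 (1 - q) by rewrite /P0 scalerBl scale1r -e subrr.
  move/P0Q => Q1q; have := QD _ _ Qq Q1q; by rewrite addrC subrK.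
have [r [Ir rm0]] : exists r, I r /\ r *: m <> 0.
  apply: contra_notP nQm => H; apply/HI => r Ir.
  by apply: contra_notP H => H; exists r.
pose x := r *: m.
have Qx : forall q, Q q -> q *: x = 0.
  move=> q Qq; rewrite /x scalerA mulrC -scalerA.
  have : Qm (q *: m) by exists q.
  by move/HI => /(_ r Ir).
pose K : M -> Prop := fun y => exists u, y = u *: x.
have sK : submodule K.
  split.
  - by exists 0; rewrite scale0r.
  - by move=> a b [u ->] [v ->]; exists (u + v); rewrite scalerDl.
  - by move=> s a [u ->]; exists (s * u); rewrite scalerA.
exists K; split; last first.
  by move=> y [u ->]; apply: (NZ); apply: (NZ).
split => //.
  by exists x; split => //; exists 1; rewrite scale1r.
move=> L [L0 LD LZ] LK [y [Ly y0]] z [u ->].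
have [s ys] := LK y Ly.
have nQs : ~ Q s by move=> Qs; apply: y0; rewrite ys Qx.
have [q [t [Qq e]]] := Qmax s nQs.
have -> : u *: x = (u * t) *: y.
  by rewrite ys scalerA -{1}[u]mulr1 e mulrDr mulrA scalerDl -scalerA Qx // scaler0 add0r.
exact: (LZ _ _ Ly).
Qed.
Local Close Scope classical_set_scope.
Section S.
Variables (R : comNzRingType) (M : lmodType R).

Lemma soc_sub : submodule (@Soc R M).
Proof.
split.
- by exists [::]; split => //; rewrite big_nil.
- move=> x y [s1 [H1 ->]] [s2 [H2 ->]]; exists (s1 ++ s2); split; last by rewrite big_cat.
  by move=> z; rewrite mem_cat => /orP[/H1|/H2].
- move=> r x [s [H ->]]; exists (map (fun z => r *: z) s); split.
    move=> z /mapP[w ws ->]; have [N [mN Nw]] := H w ws; have [[_ _ NZ] _ _] := mN.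
    by exists N; split => //; apply: NZ.
  by rewrite big_map scaler_sumr.
Qed.

Lemma min_soc (K : M -> Prop) x : minimal_sub K -> K x -> @Soc R M x.
Proof. by move=> mK Kx; exists [:: x]; split; [move=> z; rewrite inE => /eqP ->; exists K|rewrite big_seq1]. Qed.

Lemma key (N L : M -> Prop) : minimal_sub N -> submodule L ->
  nonzero_sub (subI N L) -> forall x, N x -> L x.
Proof.
move=> [[N0 ND NZ] _ Nmin] [L0 LD LZ] nz x Nx.
have sI : submodule (subI N L).
  split; first by split.
  - by move=> a b [? ?] [? ?]; split; [apply: ND|apply: LD].
  - by move=> r a [? ?]; split; [apply: NZ|apply: LZ].
by case: (Nmin _ sI (fun m h => proj1 h) nz x Nx).
Qed.

Lemma soc_in (K : M -> Prop) : submodule K ->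
  (forall N, minimal_sub N -> forall x, N x -> K x) -> forall x, @Soc R M x -> K x.
Proof.
move=> [K0 KD KZ] H x [s [Hs ->]].
elim: s Hs => [|a s IH] Hs; first by rewrite big_nil.
rewrite big_cons; apply: KD.
  by have [N [mN Na]] := Hs a (mem_head _ _); exact: H mN _ Na.
by apply: IH => z zs; apply: Hs; rewrite inE zs orbT.
Qed.

End S.

Theorem lemma2p5 (R : comNzRingType) (M : lmodType R) :
  comultiplication M -> (exists m : M, m <> 0) ->
  (uniform M <-> cocyclic M).
Proof.
move=> cM [m0 m00]; split.
- move=> U.
  have sT : submodule (fun _ : M => True) by [].
  have [K0 [mK0 _]] := @min_in _ _ cM _ sT (ex_intro _ m0 (conj I m00)).
  have allK0 N : minimal_sub N -> forall x, N x -> K0 x.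
    move=> mN; apply: key => //; first by case: mK0 => [[]].
    by apply: U; [case: mN|case: mK0|case: mN|case: mK0].
  have socK0 : forall x, @Soc R M x -> K0 x by apply: soc_in => //; case: mK0.
  split.
    split; first exact: soc_sub.
      have [_ [k [Kk k0]] _] := mK0; exists k; split => //; exact: (@min_soc _ _ _ _ mK0 Kk).
    move=> L sL LS [l [Ll l0]] x Sx.
    apply: (@key _ _ _ _ mK0 sL _ x (socK0 _ Sx)).
    by exists l; split => //; split => //; apply: (socK0); apply: (LS).
  move=> L sL nL.
  have [K [mK KL]] := @min_in _ _ cM _ sL nL.
  have [_ [k [Kk k0]] _] := mK; exists k; split => //; split; [exact: (@min_soc _ _ _ _ mK Kk)|exact: KL].
- move=> [[sS nS Smin] lS] N L sN sL nN nL.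
  have SN : forall x, @Soc R M x -> N x.
    have := lS N sN nN => nSN.
    have sI : submodule (subI (@Soc R M) N).
      case: sS => a b c; case: sN => a' b' c'; split; first by split.
      - by move=> x y [? ?] [? ?]; split; [apply: b|apply: b'].
      - by move=> r x [? ?]; split; [apply: c|apply: c'].
    by move=> x Sx; case: (Smin _ sI (fun m h => proj1 h) nSN x Sx).
  have SL : forall x, @Soc R M x -> L x.
    have := lS L sL nL => nSL.
    have sI : submodule (subI (@Soc R M) L).
      case: sS => a b c; case: sL => a' b' c'; split; first by split.
      - by move=> x y [? ?] [? ?]; split; [apply: b|apply: b'].
      - by move=> r x [? ?]; split; [apply: c|apply: c'].
    by move=> x Sx; case: (Smin _ sI (fun m h => proj1 h) nSL x Sx).
  by case: nS => x [Sx x0]; exists x; split => //; split; [apply: SN|apply: SL].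
Qed.
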